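(* Let $U\subset\mathbb C$ be a convex domain bounded by a smooth Jordan curve, and let $f$ be holomorphic in a neighborhood of $\overline U$ with $\operatorname{Re}(f')>0$ in $U$ and $f(z)\ne z$ for all $z\in\partial U$. Let $V^*=\{z\in U\cap f^{-1}(U): f(z)\ne z\}$ and $U^*=\{z\in U: f(z)\neq z\}$. If $z\in V^*$, then the segment $[z,f(z)]$ is contained in $U^*$.
   Context: $[z,w]$ denotes the Euclidean segment between $z$ and $w$. *)

(* Defs.v *)
From Stdlib Require Import Reals.
From Coquelicot Require Export Coquelicot.
Open Scope R_scope.

Definition segment (z w : C) : C -> Prop :=
  fun p => exists t : R, 0 <= t <= 1 /\ p = Cplus z (Cmult (RtoC t) (Cminus w z)).

Definition convex_set (U : C -> Prop) : Prop :=
  forall z w, U z -> U w -> forall p, segment z w p -> U p.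

Definition connected_set (U : C -> Prop) : Prop :=
  ~ exists A B : C -> Prop, open A /\ open B /\
      (forall z, U z -> A z \/ B z) /\
      (forall z, U z -> A z -> B z -> False) /\
      (exists z, U z /\ A z) /\ (exists z, U z /\ B z).

Definition open_domain (U : C -> Prop) : Prop :=
  (exists z, U z) /\ open U /\ connected_set U.

Definition closure_set (U : C -> Prop) : C -> Prop :=
  fun z => forall eps : posreal, exists w, ball z eps w /\ U w.

Definition boundary_set (U : C -> Prop) : C -> Prop :=
  fun z => closure_set U z /\
           forall eps : posreal, exists w, ball z eps w /\ ~ U w.

Definition smooth_jordan_curve (g : R -> C) : Prop :=
  (exists D : nat -> R -> C,
      D O = g /\
      (forall n t, @is_derive R_AbsRing C_R_NormedModule (D n) t (D (S n) t)) /\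
      (forall t, D 1%nat t <> RtoC 0)) /\
  (forall t, g (t + 1) = g t) /\
  (forall s t, 0 <= s < 1 -> 0 <= t < 1 -> g s = g t -> s = t).

Definition bounded_by_smooth_jordan_curve (U : C -> Prop) : Prop :=
  exists g : R -> C, smooth_jordan_curve g /\
    forall z, boundary_set U z <-> exists t, z = g t.

Definition holomorphic_near_closure (f : C -> C) (U : C -> Prop) : Prop :=
  exists W : C -> Prop, open W /\ (forall z, closure_set U z -> W z) /\
    forall z, W z -> @ex_derive C_AbsRing C_NormedModule f z.

(* Main.v *)
Require Import Defs.
From Stdlib Require Import Reals Lra.
From Coquelicot Require Import Coquelicot.
Open Scope R_scope.
Lemma im_le_Cmod (d : C) : Rabs (Im d) <= Cmod d.
Proof.
  destruct d as [d1 d2]. pose proof (re_le_Cmod (d2, d1)) as H. simpl in *.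
  replace (Cmod (d1, d2)) with (Cmod (d2, d1)); auto.
  unfold Cmod; simpl; f_equal; ring.
Qed.
Lemma diff_id (d b : C) (s s0 : R) :
  Cminus (Cplus b (Cmult (RtoC s) d)) (Cplus b (Cmult (RtoC s0) d)) = Cmult (RtoC (s - s0)) d.
Proof. destruct d, b. unfold Cminus, Cplus, Cmult, Copp, RtoC; simpl. f_equal; ring. Qed.
Lemma aff_cont (b d : C) (s0 : R) (Q : C -> Prop) :
  @locally (AbsRing_UniformSpace C_AbsRing) (Cplus b (Cmult (RtoC s0) d)) Q -> locally s0 (fun s => Q (Cplus b (Cmult (RtoC s) d))).
Proof.
  intros [eps He].
  pose proof (Cmod_ge_0 d) as Hd0.
  assert (Hp : 0 < eps / (Cmod d + 1)).
  { apply Rdiv_lt_0_compat. apply cond_pos. lra. }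
  exists (mkposreal _ Hp). intros s Hs. apply He.
  change (Rabs (s - s0) < eps / (Cmod d + 1)) in Hs.
  assert (Hk : Rabs (s - s0) * (Cmod d + 1) < eps).
  { apply (Rmult_lt_compat_r (Cmod d + 1)) in Hs; [|lra].
    unfold Rdiv in Hs. rewrite Rmult_assoc, Rinv_l in Hs; lra. }
  pose proof (Rabs_pos (s - s0)).
  change (Cmod (Cminus (Cplus b (Cmult (RtoC s) d)) (Cplus b (Cmult (RtoC s0) d))) < eps).
  rewrite diff_id, Cmod_mult, Cmod_R. nra.
Qed.
Lemma alg_id (A B l d b : C) (s s0 : R) :
  Re (Cmult A (Cconj d)) - Re (Cmult B (Cconj d)) - (s - s0) * Re (Cmult (Cmult l d) (Cconj d))
  = Re (Cmult (Cminus (Cminus A B) (Cmult (Cminus (Cplus b (Cmult (RtoC s) d)) (Cplus b (Cmult (RtoC s0) d))) l)) (Cconj d)).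
Proof. destruct A, B, l, d, b. simpl. ring. Qed.
Lemma phi_deriv (f : C -> C) (b d l : C) (s0 : R) :
  is_derive f (Cplus b (Cmult (RtoC s0) d)) l ->
  is_derive (fun s : R => Re (Cmult (f (Cplus b (Cmult (RtoC s) d))) (Cconj d))) s0
    (Re (Cmult (Cmult l d) (Cconj d))).
Proof.
  intros [_ Hd]. split. { apply is_linear_scal_l. }
  intros x Hx. apply (@is_filter_lim_locally_unique R_AbsRing R_NormedModule) in Hx. subst x.
  intros eps.
  pose proof (Cmod_ge_0 d) as Hd0.
  assert (Hp : 0 < eps / (Cmod d * Cmod d + 1)).
  { apply Rdiv_lt_0_compat. apply cond_pos. nra. }
  set (p := Cplus b (Cmult (RtoC s0) d)).
  specialize (Hd p (fun P H => H) (mkposreal _ Hp)).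
  apply (aff_cont b d s0) in Hd.
  eapply filter_imp; [|exact Hd]. intros s Hs. simpl in Hs.
  change (Rabs (Re (Cmult (f (Cplus b (Cmult (RtoC s) d))) (Cconj d)) - Re (Cmult (f p) (Cconj d)) - (s - s0) * Re (Cmult (Cmult l d) (Cconj d))) <= eps * Rabs (s - s0)).
  change (Cmod (Cminus (Cminus (f (Cplus b (Cmult (RtoC s) d))) (f p)) (Cmult (Cminus (Cplus b (Cmult (RtoC s) d)) p) l)) <= eps / (Cmod d * Cmod d + 1) * Cmod (Cminus (Cplus b (Cmult (RtoC s) d)) p)) in Hs.
  rewrite (alg_id _ _ _ _ b). unfold p in *.
  rewrite diff_id in Hs. rewrite Cmod_mult, Cmod_R in Hs.
  eapply Rle_trans. apply re_le_Cmod. rewrite Cmod_mult, Cmod_conj.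
  rewrite diff_id. set (E := Cmod _).
  pose proof (Rabs_pos (s - s0)).
  assert (E * Cmod d <= eps / (Cmod d * Cmod d + 1) * (Rabs (s - s0) * Cmod d) * Cmod d) by (apply Rmult_le_compat_r; auto).
  assert (eps / (Cmod d * Cmod d + 1) * (Cmod d * Cmod d) <= eps).
  { unfold Rdiv. rewrite Rmult_assoc. pose proof (cond_pos eps).
    assert (Cmod d * Cmod d * / (Cmod d * Cmod d + 1) <= 1).
    { apply (Rmult_le_reg_r (Cmod d * Cmod d + 1)). nra.
      rewrite Rmult_assoc, Rinv_l by nra. nra. }
    nra. }
  nra.
Qed.

Theorem lemma3p3 (U : C -> Prop) (f : C -> C) :
  open_domain U ->
  convex_set U ->
  bounded_by_smooth_jordan_curve U ->
  holomorphic_near_closure f U ->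
  (forall z, U z -> 0 < Re (C_derive f z)) ->
  (forall z, boundary_set U z -> f z <> z) ->
  forall z, (U z /\ U (f z) /\ f z <> z) ->
    forall w, segment z (f z) w -> (U w /\ f w <> w).
Proof.
  intros _ Hconv _ [W [_ [HclW Hhol]]] Hre _ z [Hz [Hfz Hne]] w Hseg.
  assert (Uw : U w) by exact (Hconv z (f z) Hz Hfz w Hseg).
  split; [exact Uw|]. intro Hfix.
  destruct Hseg as [t [[t0 t1] Hw]].
  destruct (Req_dec t 0) as [Ht0|Htn].
  { subst t. apply Hne. assert (w = z) as Ewz.
    { rewrite Hw. destruct z. unfold Cminus, Cplus, Cmult, Copp, RtoC; simpl. f_equal; ring. }
    rewrite Ewz in Hfix. exact Hfix. }
  set (d := Cminus z w).
  set (phi := fun s : R => Re (Cmult (f (Cplus w (Cmult (RtoC s) d))) (Cconj d))).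
  set (df := fun s : R => Re (Cmult (Cmult (C_derive f (Cplus w (Cmult (RtoC s) d))) d) (Cconj d))).
  assert (Hder : forall s, 0 <= s <= 1 -> U (Cplus w (Cmult (RtoC s) d)) /\ is_derive phi s (df s)).
  { intros s Hs.
    assert (Hp : U (Cplus w (Cmult (RtoC s) d))).
    { apply (Hconv w z Uw Hz). exists s. split; auto. }
    split; auto.
    apply phi_deriv. apply C_derive_correct; [exact z|].
    apply Hhol, HclW. intros eps. exists (Cplus w (Cmult (RtoC s) d)). split; auto.
    apply ball_center. }
  destruct (MVT_gen phi 0 1 df) as [c [[c0 c1] Heq]].
  { intros x Hx. rewrite Rmin_left, Rmax_right in Hx by lra. apply Hder. lra. }
  { intros x Hx. rewrite Rmin_left, Rmax_right in Hx by lra.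
    apply continuity_pt_filterlim. apply (ex_derive_continuous phi x).
    eexists. apply Hder. lra. }
  rewrite Rmin_left in c0 by lra. rewrite Rmax_right in c1 by lra.
  assert (Hpos := Hre _ (proj1 (Hder c (conj c0 c1)))).
  revert Heq Hpos. unfold phi, df.
  set (L := C_derive f (Cplus w (Cmult (RtoC c) d))).
  assert (E1 : Cplus w (Cmult (RtoC 1) d) = z).
  { unfold d. destruct w, z. unfold Cminus, Cplus, Cmult, Copp, RtoC; simpl. f_equal; ring. }
  assert (E0 : Cplus w (Cmult (RtoC 0) d) = w).
  { unfold d. destruct w, z. unfold Cminus, Cplus, Cmult, Copp, RtoC; simpl. f_equal; ring. }
  rewrite E1, E0, Hfix. clearbody L. unfold d. clear - Hw Hne t0 t1 Htn.
  revert Hne Hw. generalize (f z). intros a Hne Hw. subst w.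
  destruct a as [a1 a2], z as [z1 z2], L as [l1 l2].
  assert (HD : 0 < (a1 - z1)^2 + (a2 - z2)^2).
  { destruct (Req_dec a1 z1); destruct (Req_dec a2 z2).
    - subst. exfalso; apply Hne; reflexivity.
    - assert (a2 - z2 <> 0) by lra. nra.
    - assert (a1 - z1 <> 0) by lra. nra.
    - assert (a1 - z1 <> 0) by lra. nra. }
  simpl. intros Heq Hpos.
  set (Q := (a1 - z1) ^ 2 + (a2 - z2) ^ 2) in HD.
  assert (HL : - ((1 - t) * t * Q) = l1 * (t * t * Q)).
  { unfold Q. match type of Heq with ?A = ?B => transitivity A; [ring | rewrite Heq; ring] end. }
  assert (0 < t) by lra. assert (0 < t * t * Q) by (apply Rmult_lt_0_compat; nra).
  assert (0 < l1 * (t * t * Q)) by (apply Rmult_lt_0_compat; lra).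
  assert (0 <= (1 - t) * t * Q) by (apply Rmult_le_pos; nra).
  lra.
Qed.
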